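(* Let $b\in\mathbb{N}\setminus\{1\}$, $\xi_m\in\{-1,+1\}$ ($m\in\mathbb{Z}_+$) arbitrary, $\phi:\mathbb{R}\to\mathbb{R}$ periodic with period $1$, vanishing on $\mathbb{Z}$, and H\''older continuous with exponent $\gamma\in(0,1]$, and $\psi:(0,\infty)\to(0,\infty)$ submultiplicative with $\psi(b^{-1})\in(0,1)$. Let $f(t)=\sum_{m=0}^\infty \xi_m\psi(b^{-m})\phi(b^mt)$, $t\in[0,1]$. Then for each $n\in\mathbb{N}$ and $p\ge1$, \[ V^{p,1}_n(f)=b^n\,\mathbb{E}\Big(\Big|\sum_{m=1}^n\xi_{n-m}\psi(b^{m-n})b^{-m}Y_m\Big|^p\Big). \] If in addition $\psi$ is multiplicative, then for each $n\in\mathbb{N}$ and $p\ge1$, \[ V^{p,1}_n(f)=\big((\psi(b^{-1}))^pb\big)^n\,\mathbb{E}\Big(\Big|\sum_{m=1}^n\xi_{n-m}(\psi(b^{-1})b)^{-m}Y_m\Big|^p\Big). \]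
   Context: $\psi$ submultiplicative: $\psi(xy)\le\psi(x)\psi(y)$ for $x,y>0$; multiplicative: equality holds. For a function $g$ on $[0,1]$ (extended by $g(s):=g(1)$ for $s>1$), $t\in[0,1]$, $n\in\mathbb{N}$, $p\ge1$: $V^{p,t}_n(g):=\sum_{k=0}^{\lfloor tb^n\rfloor}|g((k+1)b^{-n})-g(kb^{-n})|^p$. For $m\in\mathbb{N}$, $k\in\{0,\dots,b^m-1\}$ let $\lambda_{m,k}:=b^m(\phi((k+1)b^{-m})-\phi(kb^{-m}))$. Let $(U_n)_{n\in\mathbb{N}}$ be i.i.d. random variables uniformly distributed on $\{0,1,\dots,b-1\}$, and for $m\in\mathbb{N}$ let $R_m:=\sum_{i=1}^m U_ib^{i-1}$ and $Y_m:=\lambda_{m,R_m}$. *)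

(* Defs.v *)
From HB Require Import structures.
From mathcomp Require Import all_boot all_order all_algebra.
From mathcomp Require Import all_classical all_reals all_analysis.
Set Implicit Arguments. Unset Strict Implicit. Unset Printing Implicit Defensive.
Import Order.TTheory GRing.Theory Num.Theory.
Local Open Scope ring_scope.

Section Defs.
Context {R : realType}.

Definition psi_submultiplicative (psi : R -> R) : Prop :=
  forall x y : R, 0 < x -> 0 < y -> psi (x * y) <= psi x * psi y.
Definition psi_multiplicative (psi : R -> R) : Prop :=
  forall x y : R, 0 < x -> 0 < y -> psi (x * y) = psi x * psi y.

Definition extend1 (g : R -> R) (s : R) : R := if 1 < s then g 1 else g s.

Definition Vpt (b n : nat) (p t : R) (g : R -> R) : R :=
  \sum_(0 <= k < (Num.truncn (t * b%:R ^+ n)).+1)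
     `| extend1 g (k.+1%:R / b%:R ^+ n) - extend1 g (k%:R / b%:R ^+ n) | `^ p.

Definition lambda (b : nat) (phi : R -> R) (m k : nat) : R :=
  b%:R ^+ m * (phi (k.+1%:R / b%:R ^+ m) - phi (k%:R / b%:R ^+ m)).

Definition fser (b : nat) (xi : nat -> R) (psi phi : R -> R) (t : R) : R :=
  limn (fun N => \sum_(0 <= m < N) xi m * psi (b%:R ^+ m)^-1 * phi (b%:R ^+ m * t)).

(* Canonical model of i.i.d. uniform U_1,...,U_n on {0,...,b-1}: the sample
   space {ffun 'I_n -> 'I_b} with the uniform probability; U_i(w) = w (i-1). *)
Definition Ucoord (n b : nat) (w : {ffun 'I_n -> 'I_b}) (i : nat) : nat :=
  if i is j.+1 then
    (match (insub j : option 'I_n) with Some k => nat_of_ord (w k) | None => 0%N end)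
  else 0%N.

Definition Rdig (n b : nat) (w : {ffun 'I_n -> 'I_b}) (m : nat) : nat :=
  (\sum_(1 <= i < m.+1) Ucoord w i * b ^ i.-1)%N.

Definition Yrv (n b : nat) (phi : R -> R) (w : {ffun 'I_n -> 'I_b}) (m : nat) : R :=
  lambda b phi m (Rdig w m).

Definition Expect (n b : nat) (X : {ffun 'I_n -> 'I_b} -> R) : R :=
  (#|{ffun 'I_n -> 'I_b}|%:R)^-1 * \sum_(w : {ffun 'I_n -> 'I_b}) X w.

End Defs.

(* Main.v *)
Require Import Defs.
From HB Require Import structures.
From mathcomp Require Import all_boot all_order all_algebra.
From mathcomp Require Import all_classical all_reals all_analysis.
From mathcomp Require Import zify ring lra.
Import Order.TTheory GRing.Theory Num.Theory.
Local Open Scope ring_scope.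
Section Rd.
Variables (n b : nat).
Hypothesis b0 : (0 < b)%N.

Lemma Rdig_S (w : {ffun 'I_n -> 'I_b}) m :
  Rdig w m.+1 = (Rdig w m + Ucoord w m.+1 * b ^ m)%N.
Proof. by rewrite /Rdig big_nat_recr. Qed.

Lemma Ucoord_lt (w : {ffun 'I_n -> 'I_b}) i : (Ucoord w i < b)%N.
Proof. by case: i => [|i] //=; case: insub => [k|] //. Qed.

Lemma Ucoord_ord (w : {ffun 'I_n -> 'I_b}) (i : 'I_n) : Ucoord w i.+1 = w i.
Proof. by rewrite /Ucoord valK. Qed.

Lemma Rdig_lt (w : {ffun 'I_n -> 'I_b}) m : (Rdig w m < b ^ m)%N.
Proof.
elim: m => [|m IH]; first by rewrite /Rdig big_geq.
rewrite Rdig_S expnS.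
have := Ucoord_lt w m.+1.
have : (0 < b ^ m)%N by rewrite expn_gt0 b0.
nia.
Qed.

Lemma Rdig_mod (w : {ffun 'I_n -> 'I_b}) m k :
  (Rdig w (m + k) %% b ^ m = Rdig w m)%N.
Proof.
elim: k => [|k IH]; first by rewrite addn0 modn_small // Rdig_lt.
rewrite addnS Rdig_S expnD [(b ^ m * _)%N]mulnC mulnA -modnDm ?modnMl ?modnMr addn0 modn_mod IH.
done.
Qed.

Lemma Rdig_inj : injective (fun w : {ffun 'I_n -> 'I_b} => Rdig w n).
Proof.
move=> w w' /= E; apply/ffunP => i.
have Em : forall m, (m <= n)%N -> Rdig w m = Rdig w' m.
  move=> m mn; by rewrite -(Rdig_mod w m (n - m)) -(Rdig_mod w' m (n - m)) subnKC // E.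
have := Em i.+1 (ltn_ord i); rewrite !Rdig_S (Em i (ltnW (ltn_ord i))).
move/eqP; rewrite eqn_add2l eqn_pmul2r ?expn_gt0 ?b0 // !Ucoord_ord.
by move/eqP/val_inj.
Qed.

Lemma sum_Rdig {R : realType} (F : nat -> R) :
  \sum_(w : {ffun 'I_n -> 'I_b}) F (Rdig w n) = \sum_(0 <= k < b ^ n) F k.
Proof.
pose g (w : {ffun 'I_n -> 'I_b}) : 'I_(b ^ n) := Ordinal (Rdig_lt w n).
have bij : bijective g.
  apply: inj_card_bij; first by move=> w w' /(congr1 val) /Rdig_inj.
  by rewrite card_ffun !card_ord.
rewrite big_mkord (reindex g) //; exact: onW_bij.
Qed.
End Rd.
Section Ph.
Variables (R : realType) (b : nat) (xi : nat -> R) (phi psi : R -> R).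
Hypothesis b0 : (0 < b)%N.
Hypothesis per : forall x : R, phi (x + 1) = phi x.
Hypothesis phiZ : forall z : int, phi z%:~R = 0.

Lemma bX_neq0 j : (b%:R : R) ^+ j != 0.
Proof. by rewrite expf_neq0 // pnatr_eq0 -lt0n. Qed.

Lemma phi_addn x q : phi (x + q%:R) = phi x.
Proof. elim: q => [|q IH]; first by rewrite addr0. by rewrite -addn1 natrD addrA per. Qed.

Lemma phi_nat q : phi q%:R = 0.
Proof. by rewrite -[q%:R]add0r phi_addn; have := phiZ 0; rewrite mulr0z. Qed.

Lemma phi_mod k j :
  phi (k%:R / b%:R ^+ j) = phi ((k %% b ^ j)%:R / b%:R ^+ j).
Proof.
rewrite {1}(divn_eq k (b ^ j)) natrD natrM natrX mulrDl mulfK ?bX_neq0 //.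
by rewrite addrC phi_addn.
Qed.

Lemma fser_dyadic n (x : nat) :
  fser b xi psi phi (x%:R / b%:R ^+ n) =
  \sum_(0 <= m < n) xi m * psi (b%:R ^+ m)^-1 * phi (x%:R / b%:R ^+ (n - m)).
Proof.
rewrite /fser.
set u := fun N => _.
have -> : \sum_(0 <= m < n) xi m * psi (b%:R ^+ m)^-1 * phi (x%:R / b%:R ^+ (n - m)) = u n.
  rewrite /u; apply: eq_big_nat => m /andP[_ mn].
  congr (_ * phi _).
  rewrite -[in RHS](subnKC (ltnW mn)) exprD invfM; field.
  by rewrite !bX_neq0.
apply: norm_lim_near_cst.
near=> N.
have nN : (n <= N)%N by near: N; exists n.
rewrite /u (big_cat_nat (leq0n n) nN) /= [X in _ + X = _]big_nat_cond [X in _ + X = _]big1 ?addr0 //.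
move=> m /andP[/andP[nm _] _].
have -> : (b%:R : R) ^+ m * (x%:R / b%:R ^+ n) = (b ^ (m - n) * x)%:R.
  by rewrite natrM natrX -{1}(subnKC nm) exprD; field; rewrite bX_neq0.
by rewrite phi_nat mulr0.

Unshelve. all: end_near.
Qed.

Lemma D_eq n k :
  fser b xi psi phi (k.+1%:R / b%:R ^+ n) - fser b xi psi phi (k%:R / b%:R ^+ n) =
  \sum_(1 <= j < n.+1) xi (n - j)%N * psi (b%:R ^+ (n - j))^-1 * (b%:R ^+ j)^-1
     * lambda b phi j (k %% b ^ j).
Proof.
rewrite !fser_dyadic -sumrB big_add1 /= big_nat_rev /=.
apply: eq_big_nat => i /andP[_ ilt].
rewrite add0n.
have e : (n - (n - i.+1) = i.+1)%N by rewrite subKn.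
rewrite e /lambda.
have hm : ((k %% b ^ i.+1).+1 %% b ^ i.+1 = k.+1 %% b ^ i.+1)%N.
  by rewrite -addn1 modnDml addn1.
rewrite (phi_mod (k %% b ^ i.+1).+1) hm -(phi_mod k.+1) -(phi_mod k).
field; exact: bX_neq0.
Qed.

Lemma part1 n p : (0 < n)%N -> 1 <= p ->
     Vpt b n p 1 (fser b xi psi phi) =
       b%:R ^+ n * Expect (fun w : {ffun 'I_n -> 'I_b} =>
         `| \sum_(1 <= m < n.+1)
              xi (n - m)%N * psi (b%:R ^+ (n - m))^-1 * (b%:R ^+ m)^-1
              * Yrv phi w m | `^ p).
Proof.
move=> n0 p1.
have p0 : p != 0 by apply/eqP => p0; move: p1; rewrite p0 ler10.
set G := fun k : nat => \sum_(1 <= j < n.+1) xi (n - j)%N * psi (b%:R ^+ (n - j))^-1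
   * (b%:R ^+ j)^-1 * lambda b phi j (k %% b ^ j).
rewrite /Expect card_ffun !card_ord natrX mulrA divff ?bX_neq0 // mul1r.
transitivity (\sum_(w : {ffun 'I_n -> 'I_b}) `|G (Rdig w n)| `^ p); last first.
  apply: eq_bigr => w _; congr (`| _ | `^ p).
  apply: eq_big_nat => j /andP[j1 jn].
  rewrite /Yrv -(@Rdig_mod n b b0 w j (n - j)) subnKC //.
rewrite (@sum_Rdig n b b0 R (fun k => `|G k| `^ p)).
rewrite /Vpt mul1r -natrX.
have -> : Num.truncn ((b ^ n)%:R : R) = (b ^ n)%N.
  by apply: truncn_def; rewrite lexx ltr_nat ltnSn.
rewrite big_nat_recr; last by [].
have bn0 : (0 : R) < (b ^ n)%:R by rewrite ltr0n expn_gt0 b0.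
have -> : extend1 (fser b xi psi phi) ((b ^ n).+1%:R / (b ^ n)%:R) -
          extend1 (fser b xi psi phi) ((b ^ n)%:R / (b ^ n)%:R) = 0.
  rewrite /extend1 ifT; last by rewrite ltr_pdivlMr // mul1r ltr_nat.
  by rewrite mulfV ?(gt_eqF bn0) // ltxx subrr.
rewrite normr0 powR0 // [X in X = _]addr0.
apply: eq_big_nat => k /andP[_ kn].
rewrite /extend1 ifF; last by apply/negbTE; rewrite -leNgt ler_pdivrMr // mul1r ler_nat.
rewrite ifF; last by apply/negbTE; rewrite -leNgt ler_pdivrMr // mul1r ler_nat ltnW.
by rewrite natrX D_eq.
Qed.

Lemma powRX (x p : R) k : 0 <= x -> (x ^+ k) `^ p = (x `^ p) ^+ k.
Proof.
move=> x0; elim: k => [|k IH]; first by rewrite !expr0 powR1.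
by rewrite !exprS powRM ?exprn_ge0 // IH.
Qed.

Lemma part2 n p : (0 < n)%N -> 1 <= p ->
  (forall x : R, 0 < x -> 0 < psi x) ->
  psi_multiplicative psi ->
     Vpt b n p 1 (fser b xi psi phi) =
       (psi (b%:R)^-1 `^ p * b%:R) ^+ n * Expect (fun w : {ffun 'I_n -> 'I_b} =>
         `| \sum_(1 <= m < n.+1)
              xi (n - m)%N * ((psi (b%:R)^-1 * b%:R) ^+ m)^-1
              * Yrv phi w m | `^ p).
Proof.
move=> n0 p1 psipos mult.
rewrite part1 //.
set c : R := (b%:R)^-1.
have c0 : 0 < c by rewrite invr_gt0 ltr0n.
have pc0 : 0 < psi c by apply: psipos.
have psi1 : psi 1 = 1.
  have h := mult 1 1 ltr01 ltr01; rewrite mul1r in h.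
  by apply: (mulfI (lt0r_neq0 (psipos 1 ltr01))); rewrite mulr1 -h.
have psiX : forall k, psi (c ^+ k) = psi c ^+ k.
  elim=> [|k IH]; first by rewrite !expr0.
  by rewrite !exprS mult ?exprn_gt0 // IH.
rewrite /Expect [in RHS]exprMn [in RHS](mulrC (_ `^ p ^+ n)) -[in RHS]mulrA.
congr (_ * _); rewrite mulrCA; congr (_ * _); rewrite mulr_sumr; apply: eq_bigr => w _.
rewrite -powRX ?ltW // -(ger0_norm (exprn_ge0 n (ltW pc0))) -powRM // -normrM.
congr (`| _ | `^ p); rewrite mulr_sumr.
apply: eq_big_nat => j /andP[j1 jn].
rewrite -exprVn psiX.
have jn' : (j <= n)%N := jn.
have -> : psi c ^+ n = psi c ^+ j * psi c ^+ (n - j) by rewrite -exprD subnKC.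
rewrite exprMn.
field.
by rewrite !expf_neq0 ?(gt_eqF pc0) // pnatr_eq0 -lt0n.
Qed.
End Ph.
Theorem lemma2p4 (R : realType) (b : nat) (xi : nat -> R) (phi psi : R -> R)
  (gamma : R) :
  (2 <= b)%N ->
  (forall m : nat, xi m = 1 \/ xi m = -1) ->
  (forall x : R, phi (x + 1) = phi x) ->
  (forall z : int, phi z%:~R = 0) ->
  0 < gamma <= 1 ->
  (exists C : R, forall x y : R, `|phi x - phi y| <= C * `|x - y| `^ gamma) ->
  (forall x : R, 0 < x -> 0 < psi x) ->
  psi_submultiplicative psi ->
  0 < psi (b%:R)^-1 < 1 ->
  (forall (n : nat) (p : R), (0 < n)%N -> 1 <= p ->
     Vpt b n p 1 (fser b xi psi phi) =
       b%:R ^+ n * Expect (fun w : {ffun 'I_n -> 'I_b} =>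
         `| \sum_(1 <= m < n.+1)
              xi (n - m)%N * psi (b%:R ^+ (n - m))^-1 * (b%:R ^+ m)^-1
              * Yrv phi w m | `^ p))
  /\
  (psi_multiplicative psi ->
   forall (n : nat) (p : R), (0 < n)%N -> 1 <= p ->
     Vpt b n p 1 (fser b xi psi phi) =
       (psi (b%:R)^-1 `^ p * b%:R) ^+ n * Expect (fun w : {ffun 'I_n -> 'I_b} =>
         `| \sum_(1 <= m < n.+1)
              xi (n - m)%N * ((psi (b%:R)^-1 * b%:R) ^+ m)^-1
              * Yrv phi w m | `^ p)).
Proof.
move=> b2 _ per phiZ _ _ psipos _ _; have b0 : (0 < b)%N by apply: leq_trans b2.
split.
  by move=> n p n0 p1; apply: part1.
by move=> mult n p n0 p1; apply: part2.
Qed.
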